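(* Let $P\in\{1,2\}$, $t\in W^P_{i,k}$, let $i'$ be the least $P$-losing number and $\ell$ some $P$-losing number, and let $(\theta_{i'},\theta_{i'+2},\ldots,\theta_\ell)$ be a tuple of countable ordinals. Let $\Sigma_P$ be a partial strategy of $P$ in $\mathcal G(t)$ such that: (i) no node $u\in\Sigma_P$ has $t(u)=p_j$ with $j\le\ell$ or $t(u)=\sim$; (ii) every infinite branch all of whose prefixes lie in $\Sigma_P$ is won by $P$; (iii) for every node $u$ not reachable by $\Sigma_P$ we have $\sigma_P(t{\upharpoonright}u){\upharpoonright}\ell\le_{lex}(\theta_{i'},\ldots,\theta_\ell)$. Then $\sigma_P(t){\upharpoonright}\ell\le_{lex}(\theta_{i'},\ldots,\theta_\ell)$.
   Context: Fix natural numbers $i<k$. Trees over a ranked alphabet are partial maps $t:\omega^*\to A$ with non-empty prefix-closed domain where a node with an $m$-ary label has exactly the children $u0,\ldots,u(m-1)$; $t{\upharpoonright}u$ is the subtree at $u$. The alphabet $\tilde A_{i,k}$ has unary letters $p_i,\ldots,p_k$, a unary letter $\sim$, and binary letters $c_1,c_2$. Players $1,2$; $\bar P$ the opponent. Well-formed: no branch has infinitely many $\sim$. A node $u$ is switched if an odd number of strict prefixes $w\prec u$ have $t(w)=\sim$, kept otherwise. The game $\mathcal G(t)$: positions are nodes, moves to children, start at the root; $u$ is controlled by $P$ iff ($u$ kept and $t(u)=c_P$) or ($u$ switched and $t(u)=c_{\bar P}$). An infinite play is won by player 1 iff it is (eventually) kept and the least $j$ with infinitely many nodes labelled $p_j$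 is even, or (eventually) switched and this $j$ is odd (take $j=k$ if none occurs infinitely often). $W^P_{i,k}$ is the set of well-formed trees $t$ in which $P$ has a winning strategy. A partial strategy of $P$ is a prefix-closed set $\Sigma\subseteq\mathrm{dom}(t)$ containing the root in which every node has at least one child in $\Sigma$ and every node controlled by $P$ has exactly one child in $\Sigma$. A node $uc$ (child $c$ of $u$) is not reachable by $\Sigma$ if $u\in\Sigma$, $u$ has at least two children and is not controlled by $P$, and $uc\notin\Sigma$. $P$-losing numbers: $j\in\{i,\ldots,k\}$ odd for $P=1$, even for $P=2$; others in $\{i..k\}$ are $P$-winning; $i',k'$ least/largest $P$-losing. A $P$-signature is $\infty$ or a tuple $(\theta_{i'},\theta_{i'+2},\ldots,\theta_{k'})$ of countable ordinals, ordered lexicographically (smaller index more significant), $\infty$ largest; for $P$-losing $\ell$, $(\theta_{i'},\ldots,\theta_{k'}){\upharpoonright}\ell=(\theta_{i'},\ldots,\theta_\ell)$ and $\infty{\upharpoonright}\ell=\infty$. The maps $\sigma_P$ are the unique pointwise minimal pair assigning $P$-signatures to well-formed trees satisfying: (1) $\sigma_P(t)=\infty$ iff $P$ does not win $\mathcal G(t)$; (2) $\sigma_P(\sim(t))=(0,\ldots,0)$ if $P$ wins $\mathcal G(\sim(t))$; (3) for $\sigma_P(t)=(\theta_{i'},\ldots,\theta_{k'})$ and $P$-winning $j$: $\sigma_P(p_j(t))=(\theta_{i'},\ldots,\theta_{j-1},0,\ldots,0)$; (4) for $P$-losing $j$: $\sigma_P(p_j(t))=(\theta_{i'},\ldots,\theta_{j-2},\theta_j+1,0,\ldots,0)$;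 (5) $\sigma_P(c_P(t_L,t_R))=\min\{\sigma_P(t_L),\sigma_P(t_R)\}$; (6) $\sigma_P(c_{\bar P}(t_L,t_R))=\max\{\sigma_P(t_L),\sigma_P(t_R)\}$. *)

(* Defs.v *)
From mathcomp Require Import all_boot.
Set Implicit Arguments. Unset Strict Implicit. Unset Printing Implicit Defensive.

(* Countable ordinals, as Brouwer trees (Z, successor, sup of an       *)
(* omega-sequence) ordered by the standard inductive preorder.  Modulo *)
(* the induced equivalence [oeq], these are exactly the countable      *)
(* ordinals with their usual order.                                    *)
Inductive Ord : Type :=
| OZ : Ord
| OS : Ord -> Ord
| OL : (nat -> Ord) -> Ord.

Inductive ole : Ord -> Ord -> Prop :=
| ole_zero x : ole OZ x
| ole_trans x y z : ole x y -> ole y z -> ole x z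
| ole_succ_mono x y : ole x y -> ole (OS x) (OS y)
| ole_cocone x f n : ole x (f n) -> ole x (OL f)
| ole_limiting f x : (forall n, ole (f n) x) -> ole (OL f) x.

Definition olt (a b : Ord) : Prop := ole (OS a) b.
Definition oeq (a b : Ord) : Prop := ole a b /\ ole b a.

Inductive player := P1 | P2.
Definition opp (P : player) : player := match P with P1 => P2 | P2 => P1 end.

(* Pl j = p_j (unary), Sw = ~ (unary), C P = c_P (binary) *)
Inductive Lab := Pl of nat | Sw | C of player.

Definition arity (a : Lab) : nat :=
  match a with Pl _ => 1 | Sw => 1 | C _ => 2 end.

Definition tree := seq nat -> option Lab.

Definition is_tree (i k : nat) (t : tree) : Prop :=
  t [::] <> None /\
  (forall u c, t (rcons u c) <> None -> t u <> None) /\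
  (forall u a, t u = Some a ->
     (forall j, a = Pl j -> i <= j <= k) /\
     (forall c, t (rcons u c) <> None <-> c < arity a)).

Definition subtree (t : tree) (u : seq nat) : tree := fun w => t (u ++ w).

Definition mk1 (a : Lab) (t : tree) : tree := fun u =>
  match u with [::] => Some a | 0 :: w => t w | _ => None end.
Definition mk2 (a : Lab) (tl tr : tree) : tree := fun u =>
  match u with [::] => Some a | 0 :: w => tl w | 1 :: w => tr w | _ => None end.

(* infinite branches, given by their sequence of directions *)
Definition pref (b : nat -> nat) (n : nat) : seq nat := mkseq b n.
Definition is_branch (t : tree) (b : nat -> nat) : Prop :=
  forall n, t (pref b n) <> None.

Definition isSw (o : option Lab) : bool := if o is Some Sw then true else false.

Definition well_formed (t : tree) : Prop :=
  forall b, is_branch t b ->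
    ~ (forall N, exists n, N <= n /\ t (pref b n) = Some Sw).

Definition WFT (i k : nat) (t : tree) : Prop := is_tree i k t /\ well_formed t.

Definition switched (t : tree) (u : seq nat) : bool :=
  odd (count (fun n => isSw (t (take n u))) (iota 0 (size u))).

Definition controlled (t : tree) (P : player) (u : seq nat) : Prop :=
  (~~ switched t u /\ t u = Some (C P)) \/
  (switched t u /\ t u = Some (C (opp P))).

Definition inf_often (t : tree) (b : nat -> nat) (j : nat) : Prop :=
  forall N, exists n, N <= n /\ t (pref b n) = Some (Pl j).

Definition lim_prio (i k : nat) (t : tree) (b : nat -> nat) (m : nat) : Prop :=
  (i <= m <= k /\ inf_often t b m /\
     forall j, i <= j -> j < m -> ~ inf_often t b j) \/
  (m = k /\ forall j, i <= j <= k -> ~ inf_often t b j).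

Definition win1 (i k : nat) (t : tree) (b : nat -> nat) : Prop :=
  exists m, lim_prio i k t b m /\
    (((exists N, forall n, N <= n -> ~~ switched t (pref b n)) /\ ~~ odd m) \/
     ((exists N, forall n, N <= n -> switched t (pref b n)) /\ odd m)).

Definition won_by (i k : nat) (t : tree) (P : player) (b : nat -> nat) : Prop :=
  match P with P1 => win1 i k t b | P2 => ~ win1 i k t b end.

Definition P_wins (i k : nat) (P : player) (t : tree) : Prop :=
  exists S : seq nat -> Prop,
    S [::] /\
    (forall u c, S (rcons u c) -> S u) /\
    (forall u, S u -> t u <> None) /\
    (forall u, S u -> controlled t P u ->
       exists c, S (rcons u c) /\ forall c', S (rcons u c') -> c' = c) /\
    (forall u, S u -> ~ controlled t P u ->
       forall c, t (rcons u c) <> None -> S (rcons u c)) /\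
    (forall b, (forall n, S (pref b n)) -> won_by i k t P b).

Definition W (i k : nat) (P : player) (t : tree) : Prop :=
  WFT i k t /\ P_wins i k P t.

Definition partial_strategy (P : player) (t : tree) (S : seq nat -> Prop) : Prop :=
  S [::] /\
  (forall u c, S (rcons u c) -> S u) /\
  (forall u, S u -> t u <> None) /\
  (forall u, S u -> exists c, S (rcons u c)) /\
  (forall u, S u -> controlled t P u ->
     exists c, S (rcons u c) /\ forall c', S (rcons u c') -> c' = c).

Definition not_reachable (P : player) (t : tree) (S : seq nat -> Prop)
    (u : seq nat) (c : nat) : Prop :=
  S u /\ (exists Q, t u = Some (C Q)) /\ c < 2 /\ ~ controlled t P u /\
  ~ S (rcons u c).

Definition losing (i k : nat) (P : player) (j : nat) : bool :=
  (i <= j <= k) && (odd j == (if P is P1 then true else false)).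

(* A P-signature: None = infinity, Some th = the tuple (th j) indexed by
   the P-losing j (other values of th are irrelevant). *)
Definition sig := option (nat -> Ord).

Definition lex_le (L : nat -> bool) (a b : nat -> Ord) : Prop :=
  (forall j, L j -> oeq (a j) (b j)) \/
  (exists j, L j /\ olt (a j) (b j) /\
     forall m, L m -> m < j -> oeq (a m) (b m)).

Definition sig_le (i k : nat) (P : player) (s s' : sig) : Prop :=
  match s, s' with
  | _, None => True
  | None, Some _ => False
  | Some a, Some b => lex_le (losing i k P) a b
  end.

Definition sig_eq (i k : nat) (P : player) (s s' : sig) : Prop :=
  match s, s' with
  | None, None => True
  | Some a, Some b => forall j, losing i k P j -> oeq (a j) (b j)
  | _, _ => False
  end.

Definition zeros : nat -> Ord := fun _ => OZ.

Definition sig_min i k P (s a b : sig) : Prop :=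
  (sig_le i k P a b /\ sig_eq i k P s a) \/ (sig_le i k P b a /\ sig_eq i k P s b).
Definition sig_max i k P (s a b : sig) : Prop :=
  (sig_le i k P a b /\ sig_eq i k P s b) \/ (sig_le i k P b a /\ sig_eq i k P s a).

Definition sig_conditions (i k : nat) (P : player) (sg : tree -> sig) : Prop :=
  (forall t, WFT i k t -> (sg t = None <-> ~ P_wins i k P t)) /\
  (forall t, WFT i k t -> P_wins i k P (mk1 Sw t) ->
     sig_eq i k P (sg (mk1 Sw t)) (Some zeros)) /\
  (forall t j th, WFT i k t -> i <= j <= k -> ~~ losing i k P j ->
     sg t = Some th ->
     sig_eq i k P (sg (mk1 (Pl j) t))
       (Some (fun m => if m < j then th m else OZ))) /\
  (forall t j th, WFT i k t -> losing i k P j ->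
     sg t = Some th ->
     sig_eq i k P (sg (mk1 (Pl j) t))
       (Some (fun m => if m < j then th m
                       else if m == j then OS (th j) else OZ))) /\
  (forall tl tr, WFT i k tl -> WFT i k tr ->
     sig_min i k P (sg (mk2 (C P) tl tr)) (sg tl) (sg tr)) /\
  (forall tl tr, WFT i k tl -> WFT i k tr ->
     sig_max i k P (sg (mk2 (C (opp P)) tl tr)) (sg tl) (sg tr)).

Definition is_sigma (i k : nat) (P : player) (sg : tree -> sig) : Prop :=
  sig_conditions i k P sg /\
  forall sg', sig_conditions i k P sg' ->
    forall t, WFT i k t -> sig_le i k P (sg t) (sg' t).

Definition sig_restr_le (i k : nat) (P : player) (l : nat) (s : sig)
    (th : nat -> Ord) : Prop :=
  match s with
  | None => False
  | Some a => lex_le (fun m => losing i k P m && (m <= l)) a th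
  end.

(* Main.v *)
Require Import Defs.
From mathcomp Require Import all_boot.
From Stdlib Require Import Classical ClassicalEpsilon FunctionalExtensionality.
From mathcomp Require Import zify.
Set Implicit Arguments. Unset Strict Implicit. Unset Printing Implicit Defensive.

Fixpoint below (Q : Ord -> Prop) (y : Ord) : Prop :=
  match y with OZ => False | OS y' => Q y' | OL g => exists n, below Q (g n) end.
Fixpoint sle (x : Ord) : Ord -> Prop :=
  match x with OZ => fun _ => True | OS x' => below (sle x')
  | OL f => fun y => forall n, sle (f n) y end.

Lemma below_mono (Q Q' : Ord -> Prop) y : (forall z, Q z -> Q' z) -> below Q y -> below Q' y.
Proof. move=> H; elim: y => //= [y IH|g IH]; first by apply: H. by case=> n /IH Hn; exists n. Qed.

Lemma sle_cocone g n x : sle x (g n) -> sle x (OL g).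
Proof. elim: x => //= [x IH|f IH] H; first by exists n. by move=> m; apply: IH. Qed.

Lemma sle_refl x : sle x x.
Proof. elim: x => //= [f IH] n. by apply: (@sle_cocone f n). Qed.

Lemma sle_trans x y z : sle x y -> sle y z -> sle x z.
Proof.
elim: x y z => //= [x IH|f IH] y z; last by move=> H1 H2 n; apply: IH (H1 n) H2.
elim: y z => //= [y _|g IHg] z.
- move=> Hxy Hyz. apply: below_mono Hyz => w Hw. by apply: IH Hxy Hw.
- move=> [n Hn] Hz. by apply: IHg (Hz n).
Qed.

Lemma ole_sle x y : ole x y -> sle x y.
Proof.
elim=> //= {x y}.
- move=> x y z _ H1 _ H2; exact: sle_trans H1 H2.
- move=> x f n _ H; exact: sle_cocone H.
Qed.

Lemma ole_refl x : ole x x.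
Proof.
elim: x => [|x IH|f IH]; first by constructor.
- by constructor.
- apply: ole_limiting => n. by apply: (@ole_cocone _ _ n).
Qed.

Lemma sle_ole x y : sle x y -> ole x y.
Proof.
elim: x y => [|x IH|f IH] y /=.
- move=> _; constructor.
- elim: y => //= [y _|g IHg]; first by move/IH; apply: ole_succ_mono.
  case=> n /IHg H. exact: ole_cocone H.
- move=> H; apply: ole_limiting => n; exact: IH.
Qed.

Lemma ole_S_Z x : ~ ole (OS x) OZ.
Proof. by move/ole_sle. Qed.
Lemma ole_S_S x y : ole (OS x) (OS y) -> ole x y.
Proof. by move/ole_sle => /= /sle_ole. Qed.
Lemma ole_S_L x g : ole (OS x) (OL g) -> exists n, ole (OS x) (g n).
Proof. move/ole_sle => /= [n Hn]; exists n; exact: (@sle_ole (OS x)). Qed.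
Lemma ole_L x f n : ole (OL f) x -> ole (f n) x.
Proof. move=> H; apply: ole_trans H. apply: ole_cocone; exact: ole_refl. Qed.
Lemma ole_xS x : ole x (OS x).
Proof.
elim: x => [|x IH|f IH]; first by constructor.
- exact: ole_succ_mono.
- apply: ole_limiting => n. apply: ole_trans (IH n) _. apply: ole_succ_mono.
  apply: ole_cocone; exact: ole_refl.
Qed.

Lemma olt_wf : well_founded olt.
Proof.
have H : forall y x, ole x y -> Acc olt x.
  elim=> [|y IH|g IH] x Hxy; constructor => z Hz; have Hz' := ole_trans Hz Hxy.
  - by case: (ole_S_Z Hz').
  - apply: IH; exact: ole_S_S.
  - case: (ole_S_L Hz') => n Hn. apply: (IH n). exact: ole_trans (ole_xS z) Hn.
move=> x; apply: (H x); exact: ole_refl.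
Qed.

Lemma ole_total x y : ole x y \/ olt y x.
Proof.
rewrite /olt.
elim: x y => [|x IH|f IH] y.
- left; constructor.
- elim: y => [|y _|g IHg].
  + right; apply: ole_succ_mono; constructor.
  + case: (IH y) => H; [left|right]; exact: ole_succ_mono.
  + case: (classic (exists n, ole (OS x) (g n))) => [[n Hn]|Hn].
    * left; exact: ole_cocone Hn.
    * right; apply: ole_succ_mono; apply: ole_limiting => n.
      case: (IHg n) => H; first by case: Hn; exists n.
      exact: ole_S_S.
- case: (classic (exists n, ~ ole (f n) y)) => [[n Hn]|Hn].
  + right. case: (IH n y) => // H. apply: ole_trans H _. apply: ole_cocone; exact: ole_refl.
  + left; apply: ole_limiting => n. by apply: NNPP => H; apply: Hn; exists n.
Qed.

Lemma olt_ole a b : olt a b -> ole a b.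
Proof. move=> H; exact: ole_trans (ole_xS a) H. Qed.
Lemma olt_irr a : ~ olt a a.
Proof.
move: a; apply: (well_founded_ind olt_wf) => a IH H. exact: (IH a H H).
Qed.
Lemma olt_ole_trans a b c : olt a b -> ole b c -> olt a c.
Proof. move=> H1 H2; exact: ole_trans H1 H2. Qed.
Lemma ole_olt_trans a b c : ole a b -> olt b c -> olt a c.
Proof. move=> H1 H2; apply: ole_trans _ H2; exact: ole_succ_mono. Qed.
Lemma olt_nle a b : olt a b -> ~ ole b a.
Proof. move=> H1 H2; exact: olt_irr (olt_ole_trans H1 H2). Qed.
Lemma nle_olt a b : ~ ole a b -> olt b a.
Proof. by case: (ole_total a b). Qed.

Lemma ord_min (B : Ord -> Prop) x : B x -> exists m, B m /\ forall y, B y -> ole m y.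
Proof.
move: x; apply: (well_founded_ind olt_wf) => x IH Bx.
case: (classic (exists y, B y /\ ~ ole x y)) => [[y [By Hy]]|H].
- exact: IH (nle_olt Hy) By.
- exists x; split => // y By; apply: NNPP => Hy; apply: H; by exists y.
Qed.

Lemma oeq_refl a : oeq a a. Proof. split; exact: ole_refl. Qed.
Lemma oeq_sym a b : oeq a b -> oeq b a. Proof. by case. Qed.
Lemma oeq_trans a b c : oeq a b -> oeq b c -> oeq a c.
Proof. move=> [H1 H2] [H3 H4]; split; [exact: ole_trans H1 H3|exact: ole_trans H4 H2]. Qed.

Lemma ex_least (Q : nat -> Prop) : (exists n, Q n) -> exists n, Q n /\ forall m, m < n -> ~ Q m.
Proof.
move=> [n Qn]; elim: n {-2}n (leqnn n) Qn => [|N IH] n Hn Qn.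
- exists n; split => // m; rewrite leqn0 in Hn; by rewrite (eqP Hn).
- case: (classic (exists m, m < n /\ Q m)) => [[m [Hm Qm]]|H].
  + apply: (IH m) => //. rewrite -ltnS; exact: leq_trans Hm Hn.
  + exists n; split => // m Hm Qm; apply: H; by exists m.
Qed.

Definition lexC (L : nat -> bool) (a b : nat -> Ord) : Prop :=
  forall j, L j -> (forall m, L m -> m < j -> oeq (a m) (b m)) -> ole (a j) (b j).

Section Lex.
Variable L : nat -> bool.

Lemma lexC_refl a : lexC L a a.
Proof. move=> j _ _; exact: ole_refl. Qed.

Lemma lexC_pointwise a b : (forall j, L j -> ole (a j) (b j)) -> lexC L a b.
Proof. move=> H j Lj _; exact: H. Qed.

Lemma lexC_antisym a b : lexC L a b -> lexC L b a -> forall j, L j -> oeq (a j) (b j).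
Proof.
move=> H1 H2 j; elim: j {-2}j (leqnn j) => [|N IH] j Hj Lj.
- have Hag : forall m, L m -> m < j -> oeq (a m) (b m).
    move=> m _ Hm; exfalso; move: Hj; rewrite leqn0 => /eqP Hj; by rewrite Hj in Hm.
  split; [exact: H1|apply: H2 => // m Lm Hm; exact: oeq_sym (Hag m Lm Hm)].
- have Hag : forall m, L m -> m < j -> oeq (a m) (b m).
    move=> m Lm Hm; apply: IH => //. rewrite -ltnS; exact: leq_trans Hm Hj.
  split; [exact: H1|apply: H2 => // m Lm Hm; exact: oeq_sym (Hag m Lm Hm)].
Qed.

Lemma lexC_trans a b c : lexC L a b -> lexC L b c -> lexC L a c.
Proof.
move=> H1 H2 j Lj Hac.
have Hab : forall m, L m -> m < j -> oeq (a m) (b m).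
  move=> m; elim: m {-2}m (leqnn m) => [|N IH] m Hm Lm Hmj.
  - have Hag : forall p, L p -> p < m -> oeq (a p) (b p).
      move=> p _ Hp; exfalso; move: Hm; rewrite leqn0 => /eqP Hm; by rewrite Hm in Hp.
    have Hab' := H1 m Lm Hag.
    have Hbc : forall p, L p -> p < m -> oeq (b p) (c p).
      move=> p Lp Hp; apply: oeq_trans (oeq_sym (Hag p Lp Hp)) _; apply: Hac => //; exact: ltn_trans Hp Hmj.
    split => //. apply: ole_trans (H2 m Lm Hbc) _. exact: (proj2 (Hac m Lm Hmj)).
  - have Hag : forall p, L p -> p < m -> oeq (a p) (b p).
      move=> p Lp Hp; apply: IH => //; [rewrite -ltnS; exact: leq_trans Hp Hm|exact: ltn_trans Hp Hmj].
    have Hab' := H1 m Lm Hag.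
    have Hbc : forall p, L p -> p < m -> oeq (b p) (c p).
      move=> p Lp Hp; apply: oeq_trans (oeq_sym (Hag p Lp Hp)) _; apply: Hac => //; exact: ltn_trans Hp Hmj.
    split => //. apply: ole_trans (H2 m Lm Hbc) _. exact: (proj2 (Hac m Lm Hmj)).
have Hbc : forall m, L m -> m < j -> oeq (b m) (c m).
  move=> m Lm Hm; exact: oeq_trans (oeq_sym (Hab m Lm Hm)) (Hac m Lm Hm).
exact: ole_trans (H1 j Lj Hab) (H2 j Lj Hbc).
Qed.

Lemma lexC_at a b j : (forall m, L m -> m < j -> oeq (a m) (b m)) -> L j ->
  olt (a j) (b j) -> lexC L a b.
Proof.
move=> Hag Lj Hlt m Lm Hm.
case: (ltngtP m j) => Hmj.
- exact: (proj1 (Hag m Lm Hmj)).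
- exfalso. exact: olt_nle Hlt (proj2 (Hm j Lj Hmj)).
- rewrite Hmj; exact: olt_ole.
Qed.

Lemma lexC_total a b : lexC L a b \/ lexC L b a.
Proof.
case: (classic (exists j, L j /\ ~ oeq (a j) (b j))) => [Hex|H].
- case: (ex_least Hex) => j [[Lj Hne] Hmin].
  have Hag : forall m, L m -> m < j -> oeq (a m) (b m).
    move=> m Lm Hm; apply: NNPP => Hn; exact: (Hmin m Hm (conj Lm Hn)).
  case: (ole_total (a j) (b j)) => Hab.
  + left. apply: (lexC_at Hag Lj). apply: nle_olt => Hba; apply: Hne; by split.
  + right. apply: (@lexC_at b a j) => // m Lm Hm; exact: oeq_sym (Hag m Lm Hm).
- left => j Lj _. apply: NNPP => Hn; apply: H; exists j; split => // [[]]; done.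
Qed.

Lemma lex_le_lexC a b : lex_le L a b <-> lexC L a b.
Proof.
split.
- case=> [H|[j [Lj [Hlt Hag]]]]; first by move=> j Lj _; exact: (proj1 (H j Lj)).
  exact: lexC_at Hag Lj Hlt.
- move=> H.
  case: (classic (exists j, L j /\ ~ oeq (a j) (b j))) => [Hex|Hn].
  + case: (ex_least Hex) => j [[Lj Hne] Hmin].
    have Hag : forall m, L m -> m < j -> oeq (a m) (b m).
      move=> m Lm Hm; apply: NNPP => Hn; exact: (Hmin m Hm (conj Lm Hn)).
    right; exists j; split => //; split => //.
    apply: nle_olt => Hba; apply: Hne; split => //; exact: H.
  + left => j Lj; apply: NNPP => Hne; apply: Hn; by exists j.
Qed.

Lemma lexC_oeq_r a b c : lexC L a b -> (forall j, L j -> oeq (b j) (c j)) -> lexC L a c.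
Proof.
move=> H Hbc; apply: lexC_trans H _; apply: lexC_pointwise => j Lj; exact: (proj1 (Hbc j Lj)).
Qed.
Lemma lexC_oeq_l a b c : (forall j, L j -> oeq (a j) (b j)) -> lexC L b c -> lexC L a c.
Proof.
move=> Hab H; apply: lexC_trans H; apply: lexC_pointwise => j Lj; exact: (proj1 (Hab j Lj)).
Qed.

Lemma lexC_zeros a : lexC L zeros a.
Proof. apply: lexC_pointwise => j _; constructor. Qed.

Variable K : nat.
Hypothesis HL : forall j, L j -> j <= K.

Lemma lexmin_ex (A : (nat -> Ord) -> Prop) x : A x ->
  exists m, A m /\ forall y, A y -> lexC L m y.
Proof.
move=> Ax.
have Hn : forall n, exists a, A a /\ forall b, A b -> forall j, j < n -> L j ->
   (forall m, L m -> m < j -> oeq (a m) (b m)) -> ole (a j) (b j).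
  elim=> [|n [a [Aa Ha]]]; first by exists x; split.
  case Ln: (L n); last first.
    exists a; split => // b Ab j; rewrite ltnS leq_eqVlt; case/orP => [/eqP ->|Hj];
      [by rewrite Ln|exact: Ha].
  pose B := fun o => exists b, A b /\ (forall m, L m -> m < n -> oeq (a m) (b m)) /\ o = b n.
  have Ba : B (a n) by exists a; split => //; split => // m _ _; exact: oeq_refl.
  case: (ord_min Ba) => o [[bs [Abs [Hbs ->]]] Hmin].
  exists bs; split => // b Ab j Hj Lj Hag.
  have Hagab : forall m, L m -> m < j -> oeq (a m) (b m).
    move=> m Lm Hm; apply: oeq_trans (Hbs m Lm _) (Hag m Lm Hm).
    exact: leq_trans Hm Hj.
  move: Hj; rewrite ltnS leq_eqVlt; case/orP => [/eqP Hjn|Hjn].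
  + subst j. apply: Hmin. exists b; split => //.
  + apply: ole_trans (proj2 (Hbs j Lj Hjn)) _. exact: Ha.
case: (Hn K.+1) => a [Aa Ha]; exists a; split => // y Ay j Lj Hag.
apply: Ha => //; rewrite ltnS; exact: HL.
Qed.

End Lex.

Lemma lexC_restr (L L' : nat -> bool) a b :
  (forall m, L' m -> L m) -> (forall j m, L' j -> L m -> m < j -> L' m) ->
  lexC L a b -> lexC L' a b.
Proof.
move=> H1 H2 H j Lj Hag; apply: H; first exact: H1.
move=> m Lm Hm; apply: Hag => //; exact: H2 Lj Lm Hm.
Qed.

Lemma subtree_cat (s : tree) a b : subtree (subtree s a) b = subtree s (a ++ b).
Proof. apply: functional_extensionality => w; by rewrite /subtree catA. Qed.
Lemma subtree_nil (s : tree) : subtree s [::] = s.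
Proof. by apply: functional_extensionality => w. Qed.

Definition bcat (u : seq nat) (b : nat -> nat) : nat -> nat :=
  fun n => if n < size u then nth 0 u n else b (n - size u).

Lemma size_pref b n : size (pref b n) = n.
Proof. by rewrite /pref size_mkseq. Qed.
Lemma pref_S b n : pref b n.+1 = rcons (pref b n) (b n).
Proof. by rewrite /pref /mkseq -addn1 iotaD map_cat cats1. Qed.
Lemma pref_add b d n : pref b (d + n) = pref b d ++ pref (fun x => b (d + x)) n.
Proof.
rewrite /pref /mkseq iotaD map_cat; congr (_ ++ _).
by rewrite add0n -[X in iota X]addn0 iotaDl -map_comp.
Qed.
Lemma pref_Sl b n : pref b n.+1 = b 0 :: pref (fun x => b x.+1) n.
Proof. by rewrite -add1n pref_add. Qed.
Lemma take_pref b n m : n <= m -> take n (pref b m) = pref b n.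
Proof. move=> H; by rewrite -(subnKC H) pref_add take_size_cat // size_pref. Qed.
Lemma nth_pref b n m : n < m -> nth 0 (pref b m) n = b n.
Proof. by move=> H; rewrite /pref nth_mkseq. Qed.

Lemma pref_bcat_ge u b n : pref (bcat u b) (size u + n) = u ++ pref b n.
Proof.
rewrite pref_add; congr (_ ++ _).
- apply: (@eq_from_nth _ 0); rewrite size_pref // => x Hx.
  by rewrite nth_pref // /bcat Hx.
- rewrite /pref; apply: eq_mkseq => x. by rewrite /bcat ltnNge leq_addr /= addKn.
Qed.
Lemma pref_bcat_le u b n : n <= size u -> pref (bcat u b) n = take n u.
Proof.
move=> H; rewrite -(take_pref _ H) -(addn0 (size u)) pref_bcat_ge /pref /= cats0 //.
Qed.

Lemma dom_prefix (s : tree) u w :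
  (forall u c, s (rcons u c) <> None -> s u <> None) -> s (u ++ w) <> None -> s u <> None.
Proof.
move=> H; elim/last_ind: w => [|w c IH]; first by rewrite cats0.
rewrite -rcons_cat => /H; exact: IH.
Qed.

Section Trees.
Variables i k : nat.

Lemma is_tree_pref s u w : is_tree i k s -> s (u ++ w) <> None -> s u <> None.
Proof. move=> [_ [H _]]; exact: dom_prefix. Qed.

Lemma child_lt s u a c : is_tree i k s -> s u = Some a -> s (rcons u c) <> None -> c < arity a.
Proof. move=> [_ [_ H]] Hu; exact: (proj1 (proj2 (H u a Hu) c)). Qed.

Lemma WFT_sub s u : WFT i k s -> s u <> None -> WFT i k (subtree s u).
Proof.
move=> [[H0 [H1 H2]] Hwf] Hu; split; first split.
- by rewrite /subtree cats0.
- split.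
  + move=> w c; rewrite /subtree -rcons_cat; exact: H1.
  + move=> w a; rewrite /subtree => Ha; case: (H2 _ _ Ha) => Hj Hc; split => // c.
    by rewrite -rcons_cat.
- move=> b Hb Hinf; apply: (Hwf (bcat u b)).
  + move=> n; case: (leqP n (size u)) => Hn.
    * rewrite pref_bcat_le //. apply: (@dom_prefix s _ (drop n u) H1). by rewrite cat_take_drop.
    * rewrite -(subnKC (ltnW Hn)) pref_bcat_ge; exact: Hb.
  + move=> N; case: (Hinf N) => n [Hn Hsw]; exists (size u + n); split.
    * exact: leq_trans Hn (leq_addl _ _).
    * by rewrite pref_bcat_ge.
Qed.

Lemma WFT_node s a : s [::] = Some a -> (forall j, a = Pl j -> i <= j <= k) ->
  (forall c w, arity a <= c -> s (c :: w) = None) ->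
  (forall c, c < arity a -> WFT i k (subtree s [:: c])) -> WFT i k s.
Proof.
move=> Hr Hb Hn Hc.
have Hx : forall x w, s (x :: w) <> None -> x < arity a.
  move=> x w H; rewrite ltnNge; apply/negP => Hx; exact: H (Hn x w Hx).
split; first split.
- by rewrite Hr.
- split.
  + move=> [|x w] c /=; first by rewrite Hr.
    move=> H; have Hxa := Hx _ _ H. case: (Hc x Hxa) => [[_ [H1 _]] _].
    exact: (H1 w c H).
  + move=> [|x w] a'.
    * rewrite Hr => -[<-]; split => // c /=; split.
      -- move=> H; exact: (Hx c [::] H).
      -- move=> H; case: (Hc c H) => [[H0 _] _]; exact: H0.
    * move=> H; have Hxa : x < arity a by apply: (Hx x w); rewrite H.
      case: (Hc x Hxa) => [[_ [_ H2]] _]; exact: (H2 w a' H).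
- move=> b Hbr Hinf.
  have Hb0 : b 0 < arity a by apply: (Hx _ [::]); move: (Hbr 1); rewrite /pref /=.
  case: (Hc _ Hb0) => _ Hwf; apply: (Hwf (fun x => b x.+1)).
  + move=> n; move: (Hbr n.+1); by rewrite pref_Sl.
  + move=> N; case: (Hinf N.+1) => [[|n]] [HnN Hsw] //; exists n; split => //.
    by move: Hsw; rewrite pref_Sl.
Qed.

Lemma WFT_mk1 a t : WFT i k t -> (forall j, a = Pl j -> i <= j <= k) -> arity a = 1 ->
  WFT i k (mk1 a t).
Proof.
move=> Ht Hb Ha; apply: (WFT_node (a := a)) => //.
- move=> [|c] w; by rewrite Ha.
- rewrite Ha => [[|]] // _; exact: Ht.
Qed.

Lemma WFT_mk2 a tl tr : WFT i k tl -> WFT i k tr -> (forall j, a = Pl j -> i <= j <= k) ->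
  arity a = 2 -> WFT i k (mk2 a tl tr).
Proof.
move=> Hl Hr Hb Ha; apply: (WFT_node (a := a)) => //.
- move=> [|[|c]] w; by rewrite Ha.
- rewrite Ha => c Hc; case: c Hc => [|[|c]] // _.
Qed.

Lemma decomp1 s a : WFT i k s -> s [::] = Some a -> arity a = 1 -> s = mk1 a (subtree s [::0]).
Proof.
move=> [Ht _] Hr Ha; apply: functional_extensionality => [[|x w]] //=.
case: x => [|x] //. case E: (s (x.+1 :: w)) => [y|] //.
have H : s [:: x.+1] <> None by apply: (@is_tree_pref s [:: x.+1] w Ht); rewrite E.
by have := child_lt (u := [::]) Ht Hr H; rewrite Ha.
Qed.

Lemma decomp2 s a : WFT i k s -> s [::] = Some a -> arity a = 2 ->
  s = mk2 a (subtree s [::0]) (subtree s [::1]).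
Proof.
move=> [Ht _] Hr Ha; apply: functional_extensionality => [[|x w]] //=.
case: x => [|[|x]] //. case E: (s (x.+2 :: w)) => [y|] //.
have H : s [:: x.+2] <> None by apply: (@is_tree_pref s [:: x.+2] w Ht); rewrite E.
by have := child_lt (u := [::]) Ht Hr H; rewrite Ha.
Qed.

End Trees.

Definition dec (Q : Prop) : bool := if excluded_middle_informative Q then true else false.
Lemma decP (Q : Prop) : reflect Q (dec Q).
Proof. rewrite /dec; case: excluded_middle_informative => H; by constructor. Qed.

Definition getv (s : sig) : nat -> Ord := if s is Some x then x else zeros.

Lemma sub0_mk1 a (t : tree) : subtree (mk1 a t) [::0] = t. Proof. by []. Qed.
Lemma sub0_mk2 a (tl tr : tree) : subtree (mk2 a tl tr) [::0] = tl. Proof. by []. Qed.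
Lemma sub1_mk2 a (tl tr : tree) : subtree (mk2 a tl tr) [::1] = tr. Proof. by []. Qed.

Section KT.
Variables (i k : nat) (P : player).
Notation L := (losing i k P).
Lemma HL j : L j -> j <= k. Proof. by rewrite /losing => /andP [/andP [_ ->]]. Qed.

Definition sgle (a b : sig) : Prop :=
  match a, b with _, None => True | None, Some _ => False | Some x, Some y => lexC L x y end.

Lemma sgle_refl a : sgle a a. Proof. case: a => //= x; exact: lexC_refl. Qed.
Lemma sgle_trans a b c : sgle a b -> sgle b c -> sgle a c.
Proof. case: a => [x|]; case: b => [y|]; case: c => [z|] //= H1 H2; exact: lexC_trans H1 H2. Qed.
Lemma sgle_zeros a : sgle (Some zeros) a. Proof. case: a => //= x; exact: lexC_zeros. Qed.

Lemma sig_le_sgle a b : sig_le i k P a b <-> sgle a b.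
Proof. case: a => [x|]; case: b => [y|] //=; exact: lex_le_lexC. Qed.

Lemma sgle_eq a b : sgle a b -> sgle b a -> sig_eq i k P a b.
Proof. case: a => [x|]; case: b => [y|] //= H1 H2; exact: lexC_antisym. Qed.
Lemma sig_eq_sgle a b : sig_eq i k P a b -> sgle a b /\ sgle b a.
Proof.
case: a => [x|]; case: b => [y|] //= H; split; apply: lexC_pointwise => j Lj; by case: (H j Lj).
Qed.

Definition minv (a b : sig) : sig :=
  match a, b with None, _ => b | _, None => a
  | Some x, Some y => if dec (lexC L x y) then a else b end.
Definition maxv (a b : sig) : sig :=
  match a, b with Some x, Some y => if dec (lexC L x y) then b else a | _, _ => None end.

Definition fj (j : nat) (x : nat -> Ord) : nat -> Ord :=
  if L j then (fun m => if m < j then x m else if m == j then OS (x j) else OZ)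
  else (fun m => if m < j then x m else OZ).

Lemma fj_mono j x y : lexC L x y -> lexC L (fj j x) (fj j y).
Proof.
move=> H m Lm Hag; rewrite /fj.
have Hag' : forall p, L p -> p < m -> p < j -> oeq (x p) (y p).
  move=> p Lp Hp Hpj; move: (Hag p Lp Hp); rewrite /fj; by case: (L j); rewrite Hpj.
case: (L j).
- case: (ltngtP m j) => Hmj.
  + apply: H => // p Lp Hp; apply: Hag' => //; exact: ltn_trans Hp Hmj.
  + constructor.
  + apply: ole_succ_mono; apply: H; first by rewrite -Hmj.
    move=> p Lp Hp; apply: Hag' => //; by rewrite Hmj.
- case: (ltngtP m j) => Hmj; try constructor.
  apply: H => // p Lp Hp; apply: Hag' => //; exact: ltn_trans Hp Hmj.
Qed.

Definition isP (Q : player) : bool :=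
  match Q, P with P1, P1 => true | P2, P2 => true | _, _ => false end.
Lemma isP_P : isP P. Proof. rewrite /isP; by case: P. Qed.
Lemma isP_opp : isP (opp P) = false. Proof. rewrite /isP; by case: P. Qed.

Lemma minv_le a b x : minv a b = Some x ->
  (forall y, a = Some y -> lexC L x y) /\ (forall y, b = Some y -> lexC L x y).
Proof.
case: a => [xa|]; case: b => [xb|] //= E.
- move: E; case: decP => H [<-]; split => y [<-].
  + exact: lexC_refl.
  + exact: H.
  + by case: (lexC_total L xa xb).
  + exact: lexC_refl.
- move: E => [<-]; split => y // [<-]; exact: lexC_refl.
- move: E => [<-]; split => y // [<-]; exact: lexC_refl.
Qed.

Lemma minv_mono a b a' b' : (a = None <-> a' = None) -> (b = None <-> b' = None) ->
  sgle a a' -> sgle b b' -> lexC L (getv (minv a b)) (getv (minv a' b')).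
Proof.
case: a => [x|]; case: a' => [x'|]; case: b => [y|]; case: b' => [y'|] //= Ha Hb;
  try (by case: Ha => H _; discriminate (H erefl)); try (by case: Ha => _ H; discriminate (H erefl));
  try (by case: Hb => H _; discriminate (H erefl)); try (by case: Hb => _ H; discriminate (H erefl));
  try exact: lexC_refl; try (move=> _ _; exact: lexC_refl).
move=> Hx Hy.
have Hmx : lexC L (getv (if dec (lexC L x y) then Some x else Some y)) x.
  case: decP => H /=; first exact: lexC_refl. by case: (lexC_total L x y).
have Hmy : lexC L (getv (if dec (lexC L x y) then Some x else Some y)) y.
  case: decP => H //=. exact: lexC_refl.
case: (decP (lexC L x' y')) => H' /=; [exact: lexC_trans Hmx Hx|exact: lexC_trans Hmy Hy].
Qed.

Lemma maxv_mono a b a' b' : (a = None <-> a' = None) -> (b = None <-> b' = None) ->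
  sgle a a' -> sgle b b' -> lexC L (getv (maxv a b)) (getv (maxv a' b')).
Proof.
case: a => [x|]; case: a' => [x'|]; case: b => [y|]; case: b' => [y'|] //= Ha Hb;
  try (by case: Ha => H _; discriminate (H erefl)); try (by case: Ha => _ H; discriminate (H erefl));
  try (by case: Hb => H _; discriminate (H erefl)); try (by case: Hb => _ H; discriminate (H erefl));
  try exact: lexC_refl; try (move=> _ _; exact: lexC_refl).
move=> Hx Hy.
have Hmx : lexC L x' (getv (if dec (lexC L x' y') then Some y' else Some x')).
  case: decP => H /=; [exact: H|exact: lexC_refl].
have Hmy : lexC L y' (getv (if dec (lexC L x' y') then Some y' else Some x')).
  case: decP => H /=; first exact: lexC_refl. by case: (lexC_total L x' y').
case: (decP (lexC L x y)) => H' /=; [exact: lexC_trans Hy Hmy|exact: lexC_trans Hx Hmx].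
Qed.

Lemma maxv_le a b x y z : a = Some x -> b = Some y -> lexC L x z -> lexC L y z ->
  lexC L (getv (maxv a b)) z.
Proof. move=> -> -> Hx Hy /=; by case: decP. Qed.

Variable sg : tree -> sig.
Hypothesis Hcond : sig_conditions i k P sg.

Definition F (p : tree -> sig) (s : tree) : sig :=
  match sg s with None => None | Some _ =>
    match s [::] with
    | Some (Pl j) => match p (subtree s [::0]) with Some x => Some (fj j x) | None => Some zeros end
    | Some (C Q) => Some (getv (if isP Q then minv (p (subtree s [::0])) (p (subtree s [::1]))
                                else maxv (p (subtree s [::0])) (p (subtree s [::1]))))
    | _ => Some zeros
    end
  end.

Definition ple (p q : tree -> sig) := forall s, WFT i k s -> sgle (p s) (q s).
Definition pat (p : tree -> sig) := forall s, WFT i k s -> (p s = None <-> sg s = None).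
Definition Pre (p : tree -> sig) := pat p /\ forall s, WFT i k s -> sgle (F p s) (p s).

Lemma F_pat p s : F p s = None <-> sg s = None.
Proof.
rewrite /F; case: (sg s) => [a|] //; split => // H; exfalso; move: H.
by case: (s [::]) => [[j| |Q]|] //; case: (p _).
Qed.

Lemma WFT_child s a c : WFT i k s -> s [::] = Some a -> c < arity a -> WFT i k (subtree s [::c]).
Proof.
move=> Hs Ha Hc; apply: WFT_sub => //.
case: Hs => [[_ [_ H]] _]; exact: (proj2 (proj2 (H _ _ Ha) c) Hc).
Qed.

Lemma F_mono p q : pat p -> pat q -> ple p q -> ple (F p) (F q).
Proof.
move=> Hp Hq Hpq s Hs; rewrite /F; case: (sg s) => //= _.
case Hr: (s [::]) => [[j| |Q]|]; try exact: sgle_refl.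
- have H0 := WFT_child Hs Hr (isT : 0 < arity (Pl j)).
  have := Hpq _ H0; have := Hp _ H0; have := Hq _ H0.
  case: (p _) => [x|]; case: (q _) => [y|] //= H1 H2 H3.
  + exact: fj_mono.
  + by move: (proj2 H2 (proj1 H1 erefl)).
  + exact: lexC_refl.
- have H0 := WFT_child Hs Hr (isT : 0 < arity (C Q)).
  have H1 := WFT_child Hs Hr (isT : 1 < arity (C Q)).
  have E0 : (p (subtree s [::0]) = None <-> q (subtree s [::0]) = None).
    by rewrite (Hp _ H0) (Hq _ H0).
  have E1 : (p (subtree s [::1]) = None <-> q (subtree s [::1]) = None).
    by rewrite (Hp _ H1) (Hq _ H1).
  case: (isP Q) => /=; [exact: minv_mono E0 E1 (Hpq _ H0) (Hpq _ H1)
                       |exact: maxv_mono E0 E1 (Hpq _ H0) (Hpq _ H1)].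
Qed.

Lemma sg_pat : pat sg. Proof. by []. Qed.

Lemma sg_pre s : WFT i k s -> sgle (F sg s) (sg s).
Proof.
case: Hcond => C1 [C2 [C3 [C4 [C5 C6]]]] Hs.
rewrite /F; case Es: (sg s) => [a|] //.
case Hr: (s [::]) => [[j| |Q]|]; try exact: sgle_zeros.
- have H0 := WFT_child Hs Hr (isT : 0 < arity (Pl j)).
  case E0: (sg _) => [x|]; last exact: sgle_zeros.
  have Hd := decomp1 Hs Hr erefl.
  have Hj : i <= j <= k by case: Hs => [[_ [_ H]] _]; exact: (proj1 (H _ _ Hr) j erefl).
  case Lj: (L j).
  + have := C4 _ j x H0 Lj E0; rewrite -Hd Es => /sig_eq_sgle [_ H] /=.
    by rewrite /fj Lj.
  + have := C3 _ j x H0 Hj (negbT Lj) E0; rewrite -Hd Es => /sig_eq_sgle [_ H] /=.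
    by rewrite /fj Lj.
- have H0 := WFT_child Hs Hr (isT : 0 < arity (C Q)).
  have H1 := WFT_child Hs Hr (isT : 1 < arity (C Q)).
  have Hd := decomp2 Hs Hr erefl.
  have HQ : Q = P \/ Q = opp P by case: Q {Hr Hd}; case: P; auto.
  case: HQ => HQ; subst Q.
  + rewrite isP_P. have := C5 _ _ H0 H1. rewrite -Hd Es.
    case E: (minv _ _) => [m|] /=; last first.
      by move=> _; exact: lexC_zeros.
    case: (minv_le E) => Hm0 Hm1.
    case=> [[_ H]|[_ H]]; move: H; [case E0: (sg (subtree s [::0])) => [y|] //
                                    |case E1: (sg (subtree s [::1])) => [y|] //] => H.
    * apply: lexC_trans (Hm0 _ E0) _. apply: lexC_pointwise => m0 Lm; exact: (proj2 (H m0 Lm)).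
    * apply: lexC_trans (Hm1 _ E1) _. apply: lexC_pointwise => m0 Lm; exact: (proj2 (H m0 Lm)).
  + rewrite isP_opp. have := C6 _ _ H0 H1. rewrite -Hd Es.
    case E0: (sg (subtree s [::0])) => [x|]; case E1: (sg (subtree s [::1])) => [y|];
      try by case=> [[H H']|[H H']].
    case=> [[H H']|[H H']] /=; move: H; rewrite sig_le_sgle /= => H.
    * apply: (maxv_le (a := Some x) (b := Some y)) => //; last first.
        apply: lexC_pointwise => m Lm; exact: (proj2 (H' m Lm)).
      apply: lexC_trans H _; apply: lexC_pointwise => m Lm; exact: (proj2 (H' m Lm)).
    * apply: (maxv_le (a := Some x) (b := Some y)) => //.
        apply: lexC_pointwise => m Lm; exact: (proj2 (H' m Lm)).
      apply: lexC_trans H _; apply: lexC_pointwise => m Lm; exact: (proj2 (H' m Lm)).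
Qed.

Lemma sg_Pre : Pre sg. Proof. split => //; exact: sg_pre. Qed.

(* Knaster-Tarski *)
Definition lexmin (A : (nat -> Ord) -> Prop) : nat -> Ord :=
  epsilon (inhabits zeros) (fun m => A m /\ forall y, A y -> lexC L m y).
Lemma lexmin_spec (A : (nat -> Ord) -> Prop) x : A x ->
  A (lexmin A) /\ forall y, A y -> lexC L (lexmin A) y.
Proof.
move=> Ax; apply: (epsilon_spec (inhabits zeros) (fun m => A m /\ forall y, A y -> lexC L m y)).
exact: (lexmin_ex (@HL) Ax).
Qed.

Definition KA (s : tree) (x : nat -> Ord) := exists p, Pre p /\ p s = Some x.
Definition hKT (s : tree) : sig := if sg s is Some _ then Some (lexmin (KA s)) else None.

Lemma hKT_pat : pat hKT.
Proof. move=> s _; rewrite /hKT; by case: (sg s). Qed.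

Lemma hKT_le p : Pre p -> ple hKT p.
Proof.
move=> [Hp Hpre] s Hs; rewrite /hKT.
case Es: (sg s) => [a|]; last by rewrite (proj2 (Hp s Hs) Es).
case Ep: (p s) => [x|] /=; last by move: (proj1 (Hp s Hs) Ep); rewrite Es.
have Hx : KA s x by exists p.
exact: (proj2 (lexmin_spec Hx) x Hx).
Qed.

Lemma hKT_Pre : Pre hKT.
Proof.
split; first exact: hKT_pat.
move=> s Hs; rewrite {2}/hKT.
case Es: (sg s) => [a|]; last by rewrite /F Es.
have Hx : KA s a by exists sg; split => //; exact: sg_Pre.
case: (proj1 (lexmin_spec Hx)) => p0 [Hp0 E0]; rewrite -E0.
apply: sgle_trans (proj2 Hp0 s Hs).
apply: F_mono => //; [exact: hKT_pat|exact: (proj1 Hp0)|exact: hKT_le].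
Qed.

Lemma FhKT_Pre : Pre (F hKT).
Proof.
split; first by move=> s _; exact: F_pat.
move=> s Hs; apply: F_mono => //; [by move=> s' _; exact: F_pat|exact: hKT_pat|].
exact: (proj2 hKT_Pre).
Qed.

Lemma hKT_fix s : WFT i k s -> sgle (hKT s) (F hKT s) /\ sgle (F hKT s) (hKT s).
Proof.
move=> Hs; split; [exact: hKT_le FhKT_Pre s Hs|exact: (proj2 hKT_Pre) s Hs].
Qed.

Lemma hKT_eqF s : WFT i k s -> sig_eq i k P (hKT s) (F hKT s).
Proof. move=> Hs; case: (hKT_fix Hs) => H1 H2; exact: sgle_eq. Qed.

Lemma sig_max_some a x y : sig_max i k P (Some a) x y -> x <> None /\ y <> None.
Proof. case: x => [x|]; case: y => [y|] //=; by case=> [[]|[]]. Qed.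

Lemma hKT_sol : sig_conditions i k P hKT.
Proof.
case: Hcond => C1 [C2 [C3 [C4 [C5 C6]]]].
split; [|split; [|split; [|split; [|split]]]].
- move=> s Hs; rewrite -(C1 s Hs); exact: hKT_pat.
- move=> s Hs Hw.
  have Hs' : WFT i k (mk1 Sw s) by apply: WFT_mk1.
  have := hKT_eqF Hs'; rewrite /F.
  case E: (sg (mk1 Sw s)) => [a|] //; last by move: (C2 s Hs Hw); rewrite E.
- move=> s j th Hs Hj Lj E.
  have Hs' : WFT i k (mk1 (Pl j) s) by apply: WFT_mk1 => // j' [<-].
  have := hKT_eqF Hs'; rewrite /F /= E.
  have Es : sg s <> None by move=> H; move: E; rewrite /hKT H.
  case E': (sg (mk1 (Pl j) s)) => [a|]; last first.
    case Es': (sg s) Es => [x|] // _. by move: (C3 s j x Hs Hj Lj Es'); rewrite E'.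
  by rewrite /fj (negbTE Lj).
- move=> s j th Hs Lj E.
  have Hj : i <= j <= k by move: Lj; rewrite /losing => /andP [].
  have Hs' : WFT i k (mk1 (Pl j) s) by apply: WFT_mk1 => // j' [<-].
  have := hKT_eqF Hs'; rewrite /F /= E.
  have Es : sg s <> None by move=> H; move: E; rewrite /hKT H.
  case E': (sg (mk1 (Pl j) s)) => [a|]; last first.
    case Es': (sg s) Es => [x|] // _. by move: (C4 s j x Hs Lj Es'); rewrite E'.
  by rewrite /fj Lj.
- move=> tl tr Hl Hr.
  have Hs' : WFT i k (mk2 (C P) tl tr) by apply: WFT_mk2.
  have := hKT_eqF Hs'; rewrite /F /= isP_P.
  have Pl := hKT_pat Hl; have Pr := hKT_pat Hr.
  case E: (sg (mk2 (C P) tl tr)) => [a|].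
  + have := C5 _ _ Hl Hr; rewrite E => Hmin.
    case Hl': (hKT tl) => [x|]; case Hr': (hKT tr) => [y|] /= Heq.
    * move: Heq; case: decP => Hxy /= Heq.
      -- left; split; last exact: Heq. by rewrite sig_le_sgle.
      -- right; split; last exact: Heq. rewrite sig_le_sgle /=. by case: (lexC_total L x y).
    * left; split => //.
    * right; split => //.
    * exfalso. have E1 := proj1 Pl Hl'; have E2 := proj1 Pr Hr'.
      by move: Hmin; rewrite E1 E2; case=> [[_ H]|[_ H]].
  + move=> _. rewrite (proj2 (hKT_pat Hs') E). have := C5 _ _ Hl Hr; rewrite E.
    case=> [[H1 H2]|[H1 H2]].
    * left. have Etl : sg tl = None by move: H2; case: (sg tl).
      have Etr : sg tr = None by move: H1; rewrite Etl; case: (sg tr).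
      by rewrite (proj2 Pl Etl) (proj2 Pr Etr).
    * right. have Etr : sg tr = None by move: H2; case: (sg tr).
      have Etl : sg tl = None by move: H1; rewrite Etr; case: (sg tl).
      by rewrite (proj2 Pl Etl) (proj2 Pr Etr).
- move=> tl tr Hl Hr.
  have Hs' : WFT i k (mk2 (C (opp P)) tl tr) by apply: WFT_mk2.
  have := hKT_eqF Hs'; rewrite /F /= isP_opp.
  have Pl := hKT_pat Hl; have Pr := hKT_pat Hr.
  case E: (sg (mk2 (C (opp P)) tl tr)) => [a|].
  + have := C6 _ _ Hl Hr; rewrite E => Hmax.
    case Hl': (hKT tl) => [x|]; case Hr': (hKT tr) => [y|] /= Heq.
    * move: Heq; case: decP => Hxy /= Heq.
      -- left; split; last exact: Heq. by rewrite sig_le_sgle.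
      -- right; split; last exact: Heq. rewrite sig_le_sgle /=. by case: (lexC_total L x y).
    * exfalso; have E2 := proj1 Pr Hr'. by case: (sig_max_some Hmax).
    * exfalso; have E1 := proj1 Pl Hl'. by case: (sig_max_some Hmax).
    * exfalso; have E1 := proj1 Pl Hl'. by case: (sig_max_some Hmax).
  + move=> _. rewrite (proj2 (hKT_pat Hs') E). have := C6 _ _ Hl Hr; rewrite E.
    case=> [[H1 H2]|[H1 H2]].
    * left. move: H2; case E1: (sg tr) => // _. by rewrite (proj2 Pr E1); case: (hKT tl).
    * right. move: H2; case E1: (sg tl) => // _. by rewrite (proj2 Pl E1); case: (hKT tr).
Qed.

End KT.

Lemma take_size_cat_add (a b : seq nat) n : take (size a + n) (a ++ b) = a ++ take n b.
Proof. by elim: a => //= x a ->. Qed.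

Lemma switched_cat (s : tree) a b :
  switched s (a ++ b) = switched s a (+) switched (subtree s a) b.
Proof.
rewrite /switched size_cat iotaD count_cat oddD; congr addb.
- congr odd; apply: eq_in_count => n; rewrite mem_iota add0n => /andP [_ Hn].
  by rewrite takel_cat // ltnW.
- congr odd; rewrite add0n -[X in iota X]addn0 iotaDl count_map; apply: eq_count => n /=.
  by rewrite take_size_cat_add.
Qed.

Lemma switched_rcons (s : tree) u c : switched s (rcons u c) = switched s u (+) isSw (s u).
Proof.
rewrite -cats1 switched_cat; congr addb.
by rewrite /switched /= /subtree cats0; case: (isSw (s u)).
Qed.

Lemma switched_nil (s : tree) : switched s [::] = false. Proof. by []. Qed.

Lemma no_inf_chain (A : Type) (R : A -> A -> Prop) :
  (forall c : nat -> A, ~ (forall n, R (c n.+1) (c n))) -> well_founded R.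
Proof.
move=> H x; apply: NNPP => Hx.
pose nxt y := epsilon (inhabits x) (fun z => R z y /\ ~ Acc R z).
have Hn : forall y, ~ Acc R y -> R (nxt y) y /\ ~ Acc R (nxt y).
  move=> y Hy; apply: (epsilon_spec (inhabits x) (fun z => R z y /\ ~ Acc R z)).
  apply: NNPP => Hne; apply: Hy; constructor => z Rz; apply: NNPP => Hz; apply: Hne.
  by exists z.
have Hc : forall n, ~ Acc R (iter n nxt x).
  elim=> [|n IH] //=; exact: (proj2 (Hn _ IH)).
apply: (H (fun n => iter n nxt x)) => n /=; exact: (proj1 (Hn _ (Hc n))).
Qed.

Lemma lose_branch (i k : nat) (t : tree) P m b : losing i k P m ->
  (forall N, exists p, N <= p /\ t (pref b p) = Some (Pl m)) ->
  (exists N, forall p j, N <= p -> t (pref b p) = Some (Pl j) -> m <= j) ->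
  (forall p, ~~ switched t (pref b p)) -> ~ won_by i k t P b.
Proof.
move=> Lm Hinf [N0 HN0] Hk.
have Hm : i <= m <= k by move: Lm; rewrite /losing => /andP [].
have Hio : inf_often t b m by [].
have Hlow : forall j, j < m -> ~ inf_often t b j.
  move=> j Hj Hio'; case: (Hio' N0) => p [Hp Ep].
  by have := HN0 p j Hp Ep; rewrite leqNgt Hj.
have Hlim : forall m', lim_prio i k t b m' -> m' = m.
  move=> m' [[Hm' [Hio' Hlow']]|[Hm' Hno]].
  - case: (ltngtP m' m) => // H.
    + by case: (Hlow _ H Hio').
    + case/andP: Hm => Him _. by case: (Hlow' m Him H Hio).
  - by case: (Hno m Hm Hio).
have Hlimm : lim_prio i k t b m.
  left; split => //; split => // j _ Hj; exact: Hlow.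
have Hodd : odd m = (if P is P1 then true else false).
  by move: Lm; rewrite /losing => /andP [_ /eqP].
case: P Lm Hodd => Lm Hodd /=.
- case=> m' [/Hlim -> [[_ Hev]|[[N HN] _]]]; first by rewrite Hodd in Hev.
  by have := HN N (leqnn N); rewrite (negbTE (Hk N)).
- move=> Hw; apply: Hw; exists m; split => //; left; split; last by rewrite Hodd.
  exists 0 => n _; exact: Hk.
Qed.

Lemma Spre (S : seq nat -> Prop) :
  (forall u c, S (rcons u c) -> S u) -> forall u w, S (u ++ w) -> S u.
Proof.
move=> H u; elim/last_ind => [|w c IH]; first by rewrite cats0.
rewrite -rcons_cat => /H; exact: IH.
Qed.

Section Main.
Variables (i k : nat) (P : player) (sg : tree -> sig).
Hypothesis Hcond : sig_conditions i k P sg.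
Variable t : tree.
Hypothesis Ht : WFT i k t.
Variables (l : nat) (th : nat -> Ord) (S : seq nat -> Prop).
Hypothesis hS : partial_strategy P t S.
Hypothesis h1 : forall u, S u -> t u <> Some Sw /\ (forall j, j <= l -> t u <> Some (Pl j)).
Hypothesis h2 : forall b, (forall n, S (pref b n)) -> won_by i k t P b.
Hypothesis h3 : forall u c, not_reachable P t S u c ->
          sig_restr_le i k P l (sg (subtree t (rcons u c))) th.
Notation L := (losing i k P).

Lemma S_pre u w : S (u ++ w) -> S u.
Proof. case: hS => _ [H _]; exact: Spre. Qed.
Lemma S_dom u : S u -> t u <> None.
Proof. case: hS => _ [_ [H _]]; exact: H. Qed.
Lemma S_kept u : S u -> ~~ switched t u.
Proof.
elim/last_ind: u => [|u c IH] //= Hs.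
have Hu : S u by apply: (@S_pre u [:: c]); rewrite cats1.
rewrite switched_rcons (negbTE (IH Hu)) /=.
by case: (h1 Hu) => H _; case E: (t u) => [[]|] //; rewrite E in H.
Qed.
Lemma S_ctrl u : S u -> (controlled t P u <-> t u = Some (C P)).
Proof.
move=> Hs; have Hk := S_kept Hs; rewrite /controlled; split.
- by case=> [[_ ->]|[H _]] //; rewrite H in Hk.
- by move=> ->; left.
Qed.

Definition prec m v u := S u /\ S v /\ exists w, w <> [::] /\ v = u ++ w /\
  (forall n j, n < size w -> t (u ++ take n w) = Some (Pl j) -> m <= j) /\
  (exists n, n < size w /\ t (u ++ take n w) = Some (Pl m)).
Definition precW m v u := L m /\ prec m v u.

Lemma nth_common (a b x y : seq nat) n : a ++ x = b ++ y -> n < size a -> n < size b ->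
  nth 0 a n = nth 0 b n.
Proof.
move=> E Ha Hb. have := nth_cat 0 a x n; rewrite Ha => <-.
by rewrite E nth_cat Hb.
Qed.

Lemma wfW m : well_founded (precW m).
Proof.
apply: no_inf_chain => c Hc.
have Lm : L m := proj1 (Hc 0).
have Hsz : forall n, n + size (c 0) <= size (c n).
  elim=> [|n IH] //. case: (Hc n) => _ [_ [_ [w [Hw [E _]]]]].
  have Hw0 : 0 < size w by rewrite lt0n size_eq0; apply/eqP.
  rewrite E size_cat; lia.
have Hpre : forall n n', n <= n' -> exists w, c n' = c n ++ w.
  move=> n; elim=> [|n' IH]; first by rewrite leqn0 => /eqP ->; exists [::]; rewrite cats0.
  rewrite leq_eqVlt; case/orP => [/eqP ->|H]; first by exists [::]; rewrite cats0.
  case: (IH H) => w E; case: (Hc n') => _ [_ [_ [w' [_ [E' _]]]]].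
  by exists (w ++ w'); rewrite E' E catA.
pose b x := nth 0 (c x.+1) x.
have Hb : forall n, pref b (size (c n)) = c n.
  move=> n; apply: (@eq_from_nth _ 0); first by rewrite size_pref.
  move=> x; rewrite size_pref => Hx; rewrite nth_pref // /b.
  case: (Hpre x.+1 (maxn x.+1 n) (leq_maxl _ _)) => w1 E1.
  case: (Hpre n (maxn x.+1 n) (leq_maxr _ _)) => w2 E2.
  apply: (@nth_common _ _ w1 w2); first by rewrite -E1 -E2.
  - apply: leq_trans (Hsz x.+1); exact: leq_addr.
  - exact: Hx.
have Htake : forall p n, p <= size (c n) -> pref b p = take p (c n).
  move=> p n H; by rewrite -(take_pref b H) Hb.
have HS : forall p, S (pref b p).
  move=> p; rewrite (@Htake p p); last exact: leq_trans (leq_addr _ _) (Hsz p).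
  case: (Hc p) => _ [Hs _]; apply: (@S_pre _ (drop p (c p))); by rewrite cat_take_drop.
apply: (lose_branch Lm (b := b)) (h2 HS).
- move=> N; case: (Hc N) => _ [_ [_ [w [Hw [E [_ [q [Hq Eq]]]]]]]].
  exists (size (c N) + q); split; first exact: leq_trans (leq_addr _ _) (leq_trans (Hsz N) (leq_addr _ _)).
  rewrite (@Htake _ N.+1); first by rewrite E take_size_cat_add.
  by rewrite E size_cat leq_add2l ltnW.
- exists (size (c 0)) => p j Hp Ej.
  have Hex : exists n, p < size (c n).
    exists p.+1; apply: leq_trans (Hsz p.+1); exact: leq_addr.
  case: (ex_least Hex) => [[|n]] [Hn Hmin]; first by rewrite ltnNge Hp in Hn.
  have Hn' : size (c n) <= p by rewrite leqNgt; apply/negP; apply: Hmin.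
  case: (Hc n) => _ [_ [_ [w [Hw [E [Hprio _]]]]]].
  move: Ej; rewrite (Htake _ n.+1 (ltnW Hn)) E -(subnKC Hn') take_size_cat_add => Ej.
  apply: Hprio Ej. by rewrite -(ltn_add2l (size (c n))) subnKC // -size_cat -E.
- move=> p; exact: S_kept.
Qed.

Definition exitn e := exists u c, e = rcons u c /\ not_reachable P t S u c.

Definition Om m : Ord := OL (fun n => match (unpickle n : option (seq nat)) with
  | Some e => if dec (exitn e) then OS (getv (sg (subtree t e)) m) else OZ
  | None => OZ end).

Definition Rf m u (rec : forall v, precW m v u -> Ord) : Ord :=
  OL (fun n => match n with 0 => Om m
     | n'.+1 => match (unpickle n' : option (seq nat)) with
        | Some v => match excluded_middle_informative (precW m v u) with
                    | left H => OS (rec v H) | right _ => OZ end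
        | None => OZ end end).

Definition R m : seq nat -> Ord := Fix (wfW m) (fun _ => Ord) (@Rf m).

Lemma R_eq m u : R m u = @Rf m u (fun v _ => R m v).
Proof.
rewrite /R Fix_eq // => x f g Hfg; rewrite /Rf; congr OL.
apply: functional_extensionality => [[|n]] //.
case: (unpickle n) => [v|] //; case: excluded_middle_informative => // H; by rewrite Hfg.
Qed.

Lemma R1 m v u : precW m v u -> olt (R m v) (R m u).
Proof.
move=> H; rewrite /olt (R_eq m u) /Rf; apply: (@ole_cocone _ _ (pickle v).+1).
rewrite pickleK; case: excluded_middle_informative => // _; exact: ole_refl.
Qed.

Lemma R2 m u u' : (forall v, precW m v u' -> precW m v u) -> ole (R m u') (R m u).
Proof.
move=> H; rewrite [R m u']R_eq /Rf; apply: ole_limiting => [[|n]].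
- rewrite R_eq; apply: (@ole_cocone _ _ 0); exact: ole_refl.
- case: (unpickle n) => [v|]; last constructor.
  case: excluded_middle_informative => Hv; last constructor.
  exact: R1 (H _ Hv).
Qed.

Lemma R3 m u : ole (Om m) (R m u).
Proof. rewrite R_eq; apply: (@ole_cocone _ _ 0); exact: ole_refl. Qed.

Definition glue (x y : nat -> Ord) : nat -> Ord := fun m => if m <= l then x m else y m.
Definition tau u : nat -> Ord := fun m => R m u.
Definition Ag (r : tree) (x : nat -> Ord) :=
  sg r = Some x \/ exists u, S u /\ subtree t u = r /\ x = glue th (tau u).
Definition gg (r : tree) : sig := if sg r is Some _ then Some (lexmin i k P (Ag r)) else None.

Lemma gg_spec r a : sg r = Some a ->
  exists m, gg r = Some m /\ Ag r m /\ forall y, Ag r y -> lexC L m y.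
Proof.
move=> E; have Ha : Ag r a by left.
case: (@lexmin_spec i k P _ _ Ha) => H1 H2; exists (lexmin i k P (Ag r)); split => //; by rewrite /gg E.
Qed.

Lemma gg_pat : pat i k sg gg.
Proof. move=> s _; rewrite /gg; by case: (sg s). Qed.

Lemma gg_le_sg : ple i k P gg sg.
Proof.
move=> s _; case E: (sg s) => [a|]; last by rewrite /gg E.
case: (gg_spec E) => m [-> [_ H]] /=; apply: H; by left.
Qed.

Lemma exit_le u c x : not_reachable P t S u c -> sg (subtree t (rcons u c)) = Some x ->
  forall v, lexC L x (glue th (tau v)).
Proof.
move=> Hnr Ex v.
have := h3 Hnr; rewrite Ex /= => /lex_le_lexC Hr.
move=> j Lj Hag; rewrite /glue /tau.
case: (leqP j l) => Hjl.
- apply: Hr; first by rewrite Lj Hjl.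
  move=> m /andP [Lm Hml] Hmj. move: (Hag m Lm Hmj); by rewrite /glue Hml.
- apply: olt_ole; apply: ole_trans (R3 j v).
  apply: (@ole_cocone _ _ (pickle (rcons u c))); rewrite pickleK.
  rewrite /dec; case: excluded_middle_informative => [Hy|Hn] /=; last by case: Hn; exists u, c.
  rewrite Ex /=; exact: ole_refl.
Qed.

Lemma prec_up m u c v : S u -> (forall j', t u = Some (Pl j') -> m <= j') ->
  precW m v (rcons u c) -> precW m v u.
Proof.
move=> Hu Hj [Lm [Huc [Hv [w [Hw [E [Hp [q [Hq Eq]]]]]]]]].
split => //; split => //; split => //; exists (c :: w); split => //; split.
  by rewrite E -cats1 -catA.
split.
- move=> [|n] j' /= Hn; first by rewrite cats0; exact: Hj.
  rewrite -cat_rcons; exact: Hp.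
- exists q.+1; split => //=. by rewrite -cat_rcons.
Qed.

Lemma tau_up u c : S u -> (forall j', t u = Some (Pl j') -> False) ->
  forall m, ole (R m (rcons u c)) (R m u).
Proof.
move=> Hu Hj m; apply: R2 => v; apply: prec_up => // j' E; by case: (Hj j' E).
Qed.

Lemma glue_mono x y y' : (forall m, L m -> l < m -> ole (y m) (y' m)) ->
  lexC L (glue x y) (glue x y').
Proof.
move=> H; apply: lexC_pointwise => m Lm; rewrite /glue.
case: (leqP m l) => Hm; [exact: ole_refl|exact: H].
Qed.

Hypothesis Hwin : forall u, S u -> sg (subtree t u) <> None.

Lemma gg_le_tau u : S u -> exists x, gg (subtree t u) = Some x /\ lexC L x (glue th (tau u)).
Proof.
move=> Hu; case E: (sg (subtree t u)) => [a|]; last by case: (Hwin Hu).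
case: (gg_spec E) => m [-> [_ H]]; exists m; split => //; apply: H; right; by exists u.
Qed.

Lemma sub_child u c : subtree (subtree t u) [:: c] = subtree t (rcons u c).
Proof. by rewrite subtree_cat cats1. Qed.

Lemma KEY u : S u -> sgle i k P (F i k P sg gg (subtree t u)) (Some (glue th (tau u))).
Proof.
move=> Hu.
have Hr : WFT i k (subtree t u) := WFT_sub Ht (S_dom Hu).
have Hroot : subtree t u [::] = t u by rewrite /subtree cats0.
rewrite /F; case Es: (sg (subtree t u)) => [a|]; last by case: (Hwin Hu).
rewrite Hroot !sub_child.
have Htr : is_tree i k t by case: Ht.
case Eu: (t u) => [[j| |Q]|]; try exact: sgle_zeros.
-
  have Hjl : l < j by rewrite ltnNge; apply/negP => H; exact: (proj2 (h1 Hu) j H Eu).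
  case: hS => _ [_ [_ [Hex _]]]; case: (Hex u Hu) => c Hc.
  have Hc0 : c = 0.
    have := child_lt Htr Eu (S_dom Hc); by case: c {Hc}.
  subst c.
  case: (gg_le_tau Hc) => x [-> Hx] /=.
  apply: lexC_trans (fj_mono (j:=j) Hx) _.
  have Hup : forall m, m <= j -> ole (R m (rcons u 0)) (R m u).
    move=> m Hm; apply: R2 => v; apply: prec_up => // j' E; rewrite Eu in E; by case: E => <-.
  apply: lexC_pointwise => m Lm; rewrite /fj /glue /tau.
  case Lj: (L j).
  + case: (ltngtP m j) => Hmj.
    * case: (leqP m l) => Hml; [exact: ole_refl|exact: Hup (ltnW Hmj)].
    * constructor.
    * subst m. rewrite leqNgt Hjl /=. apply: R1; split => //; split => //; split => //.
      exists [:: 0]; split => //; split; first by rewrite cats1.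
      split.
      -- move=> [|n] j' //= _; rewrite cats0 Eu => -[<-] //.
      -- exists 0; split => //=; by rewrite cats0.
  + case: (ltngtP m j) => Hmj; try constructor.
    case: (leqP m l) => Hml; [exact: ole_refl|exact: Hup (ltnW Hmj)].
-
  have HQ : Q = P \/ Q = opp P by case: Q {Eu}; case: P; auto.
  have Hnopl : forall j', t u = Some (Pl j') -> False by move=> j'; rewrite Eu.
  case: HQ => HQ; subst Q.
  + rewrite isP_P.
    have Hctl : controlled t P u by apply/(S_ctrl Hu).
    case: hS => _ [_ [_ [_ Hst]]]; case: (Hst u Hu Hctl) => c [Hc _].
    have Hc2 : c < 2 by exact: (child_lt Htr Eu (S_dom Hc)).
    case: (gg_le_tau Hc) => x [Ex Hx].
    have Hm : exists m, minv i k P (gg (subtree t (rcons u 0))) (gg (subtree t (rcons u 1))) = Some m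
                /\ lexC L m x.
      case E: (minv _ _ _ _ _) => [m|].
      * exists m; split => //; case: (minv_le E) => H0 H1.
        by case: c Hc2 Hc Ex {Hx} => [|[|]] // _ _ Ex; [exact: H0 Ex|exact: H1 Ex].
      * exfalso.
        have [N0 N1] : gg (subtree t (rcons u 0)) = None /\ gg (subtree t (rcons u 1)) = None.
          by move: E; rewrite /minv; case: (gg _) => [?|]; case: (gg _) => [?|] //; case: dec.
        by case: c Hc2 Hc Ex {Hx} => [|[|]] // _ _; rewrite ?N0 ?N1.
    case: Hm => m [-> Hmx] /=.
    apply: lexC_trans Hmx _; apply: lexC_trans Hx _; apply: glue_mono => m0 _ _.
    exact: tau_up.
  + rewrite isP_opp.
    have Hd' : subtree t u [::] = Some (C (opp P)) by rewrite Hroot.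
    have Hd2 := decomp2 Hr Hd' erefl.
    have H0 := WFT_child Hr Hd' (isT : 0 < arity (C (opp P))).
    have H1 := WFT_child Hr Hd' (isT : 1 < arity (C (opp P))).
    case: Hcond => _ [_ [_ [_ [_ C6]]]].
    have := C6 _ _ H0 H1; rewrite -Hd2 Es !sub_child => /sig_max_some [N0 N1].
    have Hch : forall c, c < 2 -> sg (subtree t (rcons u c)) <> None ->
        exists x, gg (subtree t (rcons u c)) = Some x /\ lexC L x (glue th (tau u)).
      move=> c Hc2 Hn; case E: (sg (subtree t (rcons u c))) => [a'|]; last by case: Hn.
      case: (gg_spec E) => x [Ex [_ Hx]]; exists x; split => //.
      case: (classic (S (rcons u c))) => HSc.
      * case: (gg_le_tau HSc) => x' [Ex' Hx']; rewrite Ex in Ex'; case: Ex' => ->.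
        apply: lexC_trans Hx' _; apply: glue_mono => m0 _ _; exact: tau_up.
      * have Hnr : not_reachable P t S u c.
          split => //; split; first by exists (opp P).
          split => //; split => //.
          move/(S_ctrl Hu); rewrite Eu => -[]; by case: P.
        apply: lexC_trans (Hx a' (or_introl E)) _; exact: exit_le Hnr E u.
    case: (Hch 0 isT N0) => x0 [E0 Hx0]; case: (Hch 1 isT N1) => x1 [E1 Hx1].
    exact: maxv_le E0 E1 Hx0 Hx1.
Qed.

Lemma gg_Pre : Pre i k P sg gg.
Proof.
split; first exact: gg_pat.
move=> r Hr; case E: (sg r) => [a|]; last by rewrite /F /gg E.
case: (gg_spec E) => m [Em [Hm _]]; rewrite Em.
case: Hm => [Ea|[u [Hu [<- ->]]]]; last exact: KEY Hu.
apply: sgle_trans (F_mono gg_pat (@sg_pat i k sg) gg_le_sg Hr) _.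
have := sg_pre Hcond Hr; by rewrite Ea.
Qed.

Lemma core : (forall sg', sig_conditions i k P sg' -> forall s, WFT i k s ->
    sig_le i k P (sg s) (sg' s)) -> S [::] -> sig_restr_le i k P l (sg t) th.
Proof.
move=> Hmin HS0.
have H1 := Hmin _ (hKT_sol Hcond) t Ht; rewrite sig_le_sgle in H1.
have H2 := hKT_le gg_Pre Ht.
case: (gg_le_tau HS0) => x [Ex Hx]; rewrite subtree_nil in Ex.
case Es: (sg t) => [a|]; last by case: (Hwin HS0); rewrite subtree_nil.
have H3 := sgle_trans H1 H2; rewrite Es Ex /= in H3.
have Hax := lexC_trans H3 Hx.
rewrite /sig_restr_le; apply/lex_le_lexC.
apply: lexC_oeq_r (lexC_restr _ _ Hax) _.
- by move=> m /andP [].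
- move=> j m /andP [_ Hj] Lm Hmj; rewrite Lm /=; exact: leq_trans (ltnW Hmj) Hj.
- move=> j /andP [_ Hj]; rewrite /glue Hj; exact: oeq_refl.
Qed.

End Main.

Lemma catsI (s a b : seq nat) : s ++ a = s ++ b -> a = b.
Proof. by elim: s => //= x s IH [] /IH. Qed.

Lemma cat_prefix (a b x y : seq nat) : a ++ x = b ++ y -> size a <= size b ->
  exists z, b = a ++ z.
Proof.
move=> E H; exists (take (size b - size a) x).
have E1 : take (size b) (b ++ y) = b by rewrite take_size_cat.
have E2 : take (size b) (a ++ x) = a ++ take (size b - size a) x.
  by rewrite -{1}(subnKC H) take_size_cat_add.
by rewrite -E2 E E1.
Qed.

Lemma io_shift (Q1 Q2 : nat -> Prop) d1 d2 : (forall n, Q1 (d1 + n) <-> Q2 (d2 + n)) ->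
  (forall N, exists n, N <= n /\ Q1 n) -> (forall N, exists n, N <= n /\ Q2 n).
Proof.
move=> H H1 N; case: (H1 (d1 + N)) => n [Hn Qn].
exists (d2 + (n - d1)); split; first lia.
apply/H; by rewrite subnKC //; lia.
Qed.

Lemma ev_shift (Q1 Q2 : nat -> Prop) d1 d2 : (forall n, Q1 (d1 + n) <-> Q2 (d2 + n)) ->
  (exists N, forall n, N <= n -> Q1 n) -> (exists N, forall n, N <= n -> Q2 n).
Proof.
move=> H [N1 H1]; exists (d2 + N1) => n Hn.
have -> : n = d2 + (n - d2) by lia.
apply/H; apply: H1; lia.
Qed.

Section Shift.
Variables (i k : nat) (P : player) (s1 s2 : tree) (b1 b2 : nat -> nat) (d1 d2 : nat).
Hypothesis Hl : forall n, s1 (pref b1 (d1 + n)) = s2 (pref b2 (d2 + n)).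
Hypothesis Hs : forall n, switched s1 (pref b1 (d1 + n)) = switched s2 (pref b2 (d2 + n)).

Lemma io_iff j : inf_often s1 b1 j <-> inf_often s2 b2 j.
Proof.
split.
- apply: (@io_shift _ _ d1 d2) => n; by rewrite Hl.
- apply: (@io_shift _ _ d2 d1) => n; by rewrite Hl.
Qed.

Lemma lim_iff m : lim_prio i k s1 b1 m <-> lim_prio i k s2 b2 m.
Proof.
rewrite /lim_prio; split.
- case=> [[H1 [H2 H3]]|[H1 H2]]; [left|right].
  + split => //; split; first by apply/io_iff.
    move=> j Hj Hjm /io_iff; exact: H3.
  + split => // j Hj /io_iff; exact: H2.
- case=> [[H1 [H2 H3]]|[H1 H2]]; [left|right].
  + split => //; split; first by apply/io_iff.
    move=> j Hj Hjm /io_iff; exact: H3.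
  + split => // j Hj /io_iff; exact: H2.
Qed.

Lemma win1_iff : win1 i k s1 b1 <-> win1 i k s2 b2.
Proof.
have E1 : forall n, ~~ switched s1 (pref b1 (d1 + n)) <-> ~~ switched s2 (pref b2 (d2 + n)).
  by move=> n; rewrite Hs.
have E2 : forall n, switched s1 (pref b1 (d1 + n)) <-> switched s2 (pref b2 (d2 + n)).
  by move=> n; rewrite Hs.
have E1' : forall n, ~~ switched s2 (pref b2 (d2 + n)) <-> ~~ switched s1 (pref b1 (d1 + n)).
  by move=> n; rewrite Hs.
have E2' : forall n, switched s2 (pref b2 (d2 + n)) <-> switched s1 (pref b1 (d1 + n)).
  by move=> n; rewrite Hs.
split; case=> m [Hm H]; exists m; (split; first by apply/lim_iff);
  (case: H => [[H H']|[H H']]; [left|right]; split => //).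
- exact: ev_shift E1 H.
- exact: ev_shift E2 H.
- exact: ev_shift E1' H.
- exact: ev_shift E2' H.
Qed.

Lemma won_iff : won_by i k s1 P b1 <-> won_by i k s2 P b2.
Proof.
case: P => /=; first exact: win1_iff.
split => H1 H2; apply: H1; by apply/win1_iff.
Qed.
End Shift.

Definition WS (i k : nat) (P : player) (s : tree) (E : seq nat -> Prop) : Prop :=
    E [::] /\
    (forall u c, E (rcons u c) -> E u) /\
    (forall u, E u -> s u <> None) /\
    (forall u, E u -> controlled s P u ->
       exists c, E (rcons u c) /\ forall c', E (rcons u c') -> c' = c) /\
    (forall u, E u -> ~ controlled s P u ->
       forall c, s (rcons u c) <> None -> E (rcons u c)) /\
    (forall b, (forall n, E (pref b n)) -> won_by i k s P b).

Lemma ctrl_sub (t : tree) P a w : ~~ switched t a ->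
  (controlled (subtree t a) P w <-> controlled t P (a ++ w)).
Proof.
move=> Ha; rewrite /controlled switched_cat (negbTE Ha) /=; by rewrite /subtree.
Qed.

Section Game.
Variables (i k : nat) (P : player) (sg : tree -> sig).
Hypothesis Hcond : sig_conditions i k P sg.
Variable t : tree.
Hypothesis Ht : WFT i k t.
Variables (l : nat) (th : nat -> Ord) (S : seq nat -> Prop).
Hypothesis hS : partial_strategy P t S.
Hypothesis h1 : forall u, S u -> t u <> Some Sw /\ (forall j, j <= l -> t u <> Some (Pl j)).
Hypothesis h2 : forall b, (forall n, S (pref b n)) -> won_by i k t P b.
Hypothesis h3 : forall u c, not_reachable P t S u c ->
          sig_restr_le i k P l (sg (subtree t (rcons u c))) th.

Notation isex := (exitn P t S).
Let Htr : is_tree i k t. Proof. by case: Ht. Qed.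

Lemma ex_dom e : isex e -> t e <> None.
Proof.
move=> [u [c [-> [_ [[Q EQ] [Hc _]]]]]].
case: Htr => _ [_ H]; exact: (proj2 (proj2 (H _ _ EQ) c) Hc).
Qed.

Lemma ex_wins e : isex e -> P_wins i k P (subtree t e).
Proof.
move=> He; have Hw := WFT_sub Ht (ex_dom He).
case: He => u [c [Ee Hnr]]; have := h3 Hnr; rewrite -Ee.
case: Hcond => C1 _; move=> Hr; apply: NNPP => Hn.
move: (proj2 (C1 _ Hw) Hn) Hr => ->.
by [].
Qed.

Definition Estr (e : seq nat) : seq nat -> Prop :=
  epsilon (inhabits (fun _ => False)) (fun E => WS i k P (subtree t e) E).
Lemma Estr_spec e : isex e -> WS i k P (subtree t e) (Estr e).
Proof.
move=> He; apply: (epsilon_spec (inhabits (fun _ => False)) (fun E => WS i k P (subtree t e) E)).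
exact: ex_wins He.
Qed.

Lemma ex_notS e : isex e -> ~ S e.
Proof. by move=> [u [c [-> [_ [_ [_ [_ H]]]]]]]. Qed.
Lemma ex_notS_ext e w : isex e -> ~ S (e ++ w).
Proof. move=> He Hs; apply: (ex_notS He); exact: (S_pre hS (w := w) Hs). Qed.
Lemma ex_kept e : isex e -> ~~ switched t e.
Proof.
move=> [u [c [-> [Hu _]]]]; rewrite switched_rcons (negbTE (S_kept hS h1 Hu)) /=.
by case: (h1 Hu) => H _; case E: (t u) => [[]|] //; rewrite E in H.
Qed.

Lemma ex_unique e1 e2 w1 w2 : isex e1 -> isex e2 -> e1 ++ w1 = e2 ++ w2 -> e1 = e2.
Proof.
have key : forall e1 e2 w1 w2, isex e1 -> isex e2 -> e1 ++ w1 = e2 ++ w2 ->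
    size e1 <= size e2 -> e1 = e2.
  move=> a b x y Ha Hb E Hs; case: (cat_prefix E Hs) => z Ez.
  case/lastP: z Ez => [|z c] Ez; first by rewrite Ez cats0.
  exfalso; case: Hb => u [c' [Eb [Hu _]]].
  rewrite Eb -rcons_cat in Ez; case: (rcons_inj Ez) => Eu _.
  apply: (ex_notS Ha); apply: (S_pre hS (w := z)); by rewrite -Eu.
move=> Ha Hb E; case: (leqP (size e1) (size e2)) => H.
- exact: key Ha Hb E H.
- apply/esym; apply: key Hb Ha (esym E) (ltnW H).
Qed.

Variable u0 : seq nat.
Hypothesis Hu0 : S u0.
Notation s := (subtree t u0).

Definition Su (w : seq nat) : Prop :=
  S (u0 ++ w) \/ exists w1 w2, w = w1 ++ w2 /\ isex (u0 ++ w1) /\ Estr (u0 ++ w1) w2.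

Lemma Su_E w1 w2 : isex (u0 ++ w1) -> Su (w1 ++ w2) -> Estr (u0 ++ w1) w2.
Proof.
move=> He [HS|[w1' [w2' [E [He' HE]]]]].
- exfalso; apply: (ex_notS_ext (w := w2) He); by rewrite -catA.
- have : u0 ++ w1 = u0 ++ w1'.
    apply: (ex_unique (w1 := w2) (w2 := w2')) => //; by rewrite -!catA E.
  move/catsI => Ew; subst w1'. by move/catsI: E => ->.
Qed.

Lemma Su_WS : WS i k P s Su.
Proof.
have Hk0 := S_kept hS h1 Hu0.
split; [|split; [|split; [|split; [|split]]]].
- by left; rewrite cats0.
- move=> w c [HS|[w1 [w2 [E [He HE]]]]].
  + left; apply: (S_pre hS (w := [:: c])); by rewrite -catA cats1.
  + case/lastP: w2 E HE => [|w2 c'] E HE.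
    * left; rewrite cats0 in E; subst w1.
      case: He => u [c'' [Eu [Hu _]]]; rewrite -rcons_cat in Eu.
      by case: (rcons_inj Eu) => -> _.
    * right; rewrite -rcons_cat in E; case: (rcons_inj E) => -> _.
      exists w1, w2; split => //; split => //.
      case: (Estr_spec He) => _ [Hp _]; exact: Hp HE.
- move=> w [HS|[w1 [w2 [-> [He HE]]]]].
  + move=> E; apply: (S_dom hS HS). exact: E.
  + case: (Estr_spec He) => _ [_ [Hd _]]; move: (Hd _ HE); by rewrite /subtree !catA.
- move=> w Hw; rewrite (ctrl_sub _ _ Hk0) => Hc; case: Hw => [HS|[w1 [w2 [Ew [He HE]]]]].
  + case: hS => _ [_ [_ [_ Hst]]]; case: (Hst _ HS Hc) => c [Hc1 Huniq].
    exists c; split; first by left; rewrite -rcons_cat.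
    move=> c' [HS'|[w1 [w2 [E [He HE]]]]]; first by apply: Huniq; rewrite rcons_cat.
    case/lastP: w2 E HE => [|w2 c''] E HE.
    * exfalso; rewrite cats0 in E; subst w1.
      case: He => u [c3 [Eu [_ [_ [_ [Hnc _]]]]]]; rewrite -rcons_cat in Eu.
      by case: (rcons_inj Eu) => Eu' _; apply: Hnc; rewrite -Eu'.
    * exfalso; rewrite -rcons_cat in E; case: (rcons_inj E) => Ew _; subst w.
      by apply: (ex_notS_ext (w := w2) He); rewrite -catA.
  + subst w; have Hke := ex_kept He.
    have Hc' : controlled (subtree t (u0 ++ w1)) P w2 by rewrite (ctrl_sub _ _ Hke) -catA.
    case: (Estr_spec He) => _ [_ [_ [Hst _]]]; case: (Hst _ HE Hc') => c [Hc1 Huniq].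
    exists c; split; first by right; exists w1, (rcons w2 c); rewrite rcons_cat.
    move=> c' Hw'; apply: Huniq; apply: Su_E He _; by rewrite -rcons_cat.
- move=> w Hw; rewrite (ctrl_sub _ _ Hk0) => Hnc c Hdom; case: Hw => [HS|[w1 [w2 [Ew [He HE]]]]].
  + case: (classic (S (u0 ++ rcons w c))) => HSc; first by left.
    right; exists (rcons w c), [::]; split; first by rewrite cats0.
    have Hd : t (rcons (u0 ++ w) c) <> None by move: Hdom; rewrite /subtree rcons_cat.
    have Hex : isex (u0 ++ rcons w c).
      case Et: (t (u0 ++ w)) => [a|]; last by case: (S_dom hS HS).
      case: a Et => [j|| Q] Et.
      * exfalso; case: hS => _ [_ [_ [Hex _]]]; case: (Hex _ HS) => c' Hc'.
        have := child_lt Htr Et (S_dom hS Hc'); have := child_lt Htr Et Hd.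
        case: c Hdom HSc Hd => // _ HSc _ _; case: c' Hc' => // Hc' _.
        by apply: HSc; rewrite -rcons_cat.
      * by case: (h1 HS) => H _; case: (H Et).
      * exists (u0 ++ w), c; split; first by rewrite rcons_cat.
        split => //; split; first by exists Q.
        split; first exact: (child_lt Htr Et Hd).
        split => //; by rewrite rcons_cat.
    split => //; by case: (Estr_spec Hex).
  + subst w; have Hke := ex_kept He.
    have Hnc' : ~ controlled (subtree t (u0 ++ w1)) P w2 by rewrite (ctrl_sub _ _ Hke) -catA.
    case: (Estr_spec He) => _ [_ [_ [_ [Hst _]]]].
    right; exists w1, (rcons w2 c); split; first by rewrite rcons_cat.
    split => //; apply: Hst => //. move: Hdom; by rewrite /subtree rcons_cat !catA.
- move=> b Hb.
  case: (classic (forall n, S (u0 ++ pref b n))) => HA.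
  + have Hb' : forall n, S (pref (bcat u0 b) n).
      move=> n; case: (leqP n (size u0)) => Hn.
      * rewrite pref_bcat_le //; apply: (S_pre hS (w := drop n u0)); by rewrite cat_take_drop.
      * rewrite -(subnKC (ltnW Hn)) pref_bcat_ge; exact: HA.
    have E1 : forall n, t (pref (bcat u0 b) (size u0 + n)) = s (pref b (0 + n)).
      by move=> n; rewrite pref_bcat_ge add0n /subtree.
    have E2 : forall n, switched t (pref (bcat u0 b) (size u0 + n)) = switched s (pref b (0 + n)).
      by move=> n; rewrite pref_bcat_ge add0n switched_cat (negbTE Hk0).
    exact: (proj1 (won_iff i k P E1 E2) (h2 Hb')).
  + have [n HnS] : exists n, ~ S (u0 ++ pref b n).
      apply: NNPP => H; apply: HA => n; apply: NNPP => Hn; apply: H; by exists n.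
    case: (Hb n) => // -[w1 [w2 [Epb [He HE]]]].
    pose d := size w1; pose b2 := fun x => b (d + x).
    have Hd : pref b d = w1.
      have Hdn : d <= n by rewrite -(size_pref b n) Epb size_cat leq_addr.
      by rewrite -(take_pref b Hdn) Epb take_size_cat.
    have Hpd : forall m, pref b (d + m) = w1 ++ pref b2 m by move=> m; rewrite pref_add Hd.
    have HE2 : forall m, Estr (u0 ++ w1) (pref b2 m).
      move=> m; apply: Su_E He _; rewrite -Hpd; exact: Hb.
    case: (Estr_spec He) => _ [_ [_ [_ [_ Hwin]]]].
    have E1 : forall m, subtree t (u0 ++ w1) (pref b2 (0 + m)) = s (pref b (d + m)).
      by move=> m; rewrite add0n Hpd /subtree catA.
    have E2 : forall m, switched (subtree t (u0 ++ w1)) (pref b2 (0 + m)) = switched s (pref b (d + m)).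
      move=> m; rewrite add0n Hpd switched_cat subtree_cat.
      by have := ex_kept He; rewrite switched_cat (negbTE Hk0) /= => /negbTE ->.
    exact: (proj1 (won_iff i k P E1 E2) (Hwin _ HE2)).
Qed.

Lemma Su_wins : P_wins i k P s.
Proof. exists Su; exact: Su_WS. Qed.

End Game.

Lemma game_win (i k : nat) (P : player) (sg : tree -> sig) (Hcond : sig_conditions i k P sg)
  (t : tree) (Ht : WFT i k t) (l : nat) (th : nat -> Ord) (S : seq nat -> Prop)
  (hS : partial_strategy P t S)
  (h1 : forall u, S u -> t u <> Some Sw /\ (forall j, j <= l -> t u <> Some (Pl j)))
  (h2 : forall b, (forall n, S (pref b n)) -> won_by i k t P b)
  (h3 : forall u c, not_reachable P t S u c ->
          sig_restr_le i k P l (sg (subtree t (rcons u c))) th) :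
  forall u, S u -> sg (subtree t u) <> None.
Proof.
move=> u Hu; have Hw := WFT_sub Ht (S_dom hS Hu).
have Hwn := Su_wins Hcond Ht hS h1 h2 h3 Hu.
case: Hcond => C1 _; move/(C1 _ Hw); by apply.
Qed.

Theorem mainTheorem12 (i k : nat) (hik : i < k) (P : player)
  (sg : tree -> sig) (hsg : is_sigma i k P sg)
  (t : tree) (ht : W i k P t)
  (l : nat) (hl : losing i k P l) (th : nat -> Ord)
  (S : seq nat -> Prop) (hS : partial_strategy P t S)
  (h1 : forall u, S u ->
          t u <> Some Sw /\ (forall j, j <= l -> t u <> Some (Pl j)))
  (h2 : forall b, (forall n, S (pref b n)) -> won_by i k t P b)
  (h3 : forall u c, not_reachable P t S u c ->
          sig_restr_le i k P l (sg (subtree t (rcons u c))) th) :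
  sig_restr_le i k P l (sg t) th.
Proof.
case: hsg => Hcond Hmin.
have Ht' : WFT i k t := proj1 ht.
have HS0 : S [::] := proj1 hS.
exact: (core Hcond Ht' hS h1 h2 h3 (game_win Hcond Ht' hS h1 h2 h3) Hmin HS0).
Qed.
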